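(* Let $\mathscr{H}$ be a real Hilbert space and let $\mathcal{V}=\{v_n\}_{n=0}^\infty\subset\mathscr{H}$ be a sequence without positive relations such that $\mathcal{C}[[\mathcal{V}]]$ is closed. Then for every $w\in\mathscr{H}$ there is a unique subset $S\subset\mathbb{N}$ such that \[ P_{\mathcal{C}[[\mathcal{V}]]}(w)=\sum_{n\in S} a_n v_n\quad\text{with } a_n>0 \text{ for all } n\in S, \] where the pair $(S,\{a_n\}_{n\in S})$ is uniquely determined by the conditions: (i) $\sum_{n\in S}a_nv_n$ converges in $\mathscr{H}$ and $a_n>0$ for all $n\in S$; (ii) $\sum_{k\in S}a_k\langle v_k,v_n\rangle\ge\langle w,v_n\rangle$ for all $n\in\mathbb{N}$; (iii) $\sum_{k\in S}a_k\langle v_k,v_n\rangle=\langle w,v_n\rangle$ for all $n\in S$.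
   Context: $\mathbb{N}=\{0,1,2,\dots\}$. $\mathcal{C}[[\mathcal{V}]]=\{\sum_{n=0}^\infty a_n v_n : a_n\ge 0,\ \text{the series converges in }\mathscr{H}\}$ (convergence of partial sums $\sum_{n=0}^N$). For $S\subset\mathbb{N}$, ''$\sum_{n\in S}a_nv_n$ converges'' means $\lim_{N\to\infty}\sum_{n\in S,\,n\le N}a_nv_n$ exists in $\mathscr{H}$; by convention $\sum_{n\in\emptyset}a_nv_n=0$. A sequence $\{v_n\}$ has no positive relations if whenever $\sum_{n=0}^\infty a_nv_n=\sum_{n=0}^\infty b_nv_n$ for two convergent series with all $a_n,b_n\ge 0$, one has $a_n=b_n$ for all $n$. For a closed convex set $K\subset\mathscr{H}$, $P_K(w)$ denotes the metric projection: the unique point of $K$ closest to $w$. *)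

(* Defs.v *)
From HB Require Import structures.
From mathcomp Require Import all_boot all_order all_algebra.
From mathcomp Require Import all_classical all_reals all_analysis.
Set Implicit Arguments. Unset Strict Implicit. Unset Printing Implicit Defensive.
Import Order.TTheory GRing.Theory Num.Theory.
Import numFieldNormedType.Exports.
Local Open Scope classical_set_scope.
Local Open Scope ring_scope.

(* A real Hilbert space is modelled as a complete normed module H over the
   reals R together with an inner product ip whose induced norm is the norm
   of H. *)
Definition is_inner_product (R : realType) (H : normedModType R)
  (ip : H -> H -> R) : Prop :=
  [/\ (forall x y, ip x y = ip y x),
      (forall x y z, ip (x + y) z = ip x z + ip y z),
      (forall (c : R) x y, ip (c *: x) y = c * ip x y) &
      (forall x, ip x x = `|x| ^+ 2)].

Definition psum (R : realType) (H : normedModType R) (S : set nat)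
  (a : nat -> R) (v : nat -> H) (N : nat) : H :=
  \sum_(0 <= n < N.+1 | n \in S) a n *: v n.

Definition sum_cvg (R : realType) (H : normedModType R) (S : set nat)
  (a : nat -> R) (v : nat -> H) : Prop := cvgn (psum S a v).

Definition sum_on (R : realType) (H : normedModType R) (S : set nat)
  (a : nat -> R) (v : nat -> H) : H := limn (psum S a v).

Definition rsum_on (R : realType) (H : normedModType R) (ip : H -> H -> R)
  (S : set nat) (a : nat -> R) (v : nat -> H) (n : nat) : R :=
  limn (fun N => \sum_(0 <= k < N.+1 | k \in S) a k * ip (v k) (v n)).

Definition cone (R : realType) (H : normedModType R) (v : nat -> H) : set H :=
  [set x | exists a : nat -> R, (forall n, 0 <= a n) /\
     sum_cvg setT a v /\ x = sum_on setT a v].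

Definition no_positive_relations (R : realType) (H : normedModType R)
  (v : nat -> H) : Prop :=
  forall a b : nat -> R, (forall n, 0 <= a n) -> (forall n, 0 <= b n) ->
    sum_cvg setT a v -> sum_cvg setT b v ->
    sum_on setT a v = sum_on setT b v -> forall n, a n = b n.

Definition is_metric_projection (R : realType) (H : normedModType R)
  (K : set H) (w p : H) : Prop :=
  K p /\ forall y, K y -> `|w - p| <= `|w - y|.

Definition cond_i (R : realType) (H : normedModType R) (v : nat -> H)
  (S : set nat) (a : nat -> R) : Prop :=
  sum_cvg S a v /\ (forall n, S n -> 0 < a n).

Definition cond_ii (R : realType) (H : normedModType R) (ip : H -> H -> R)
  (v : nat -> H) (w : H) (S : set nat) (a : nat -> R) : Prop :=
  forall n, rsum_on ip S a v n >= ip w (v n).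

Definition cond_iii (R : realType) (H : normedModType R) (ip : H -> H -> R)
  (v : nat -> H) (w : H) (S : set nat) (a : nat -> R) : Prop :=
  forall n, S n -> rsum_on ip S a v n = ip w (v n).

(* Main.v *)
Require Import Defs.
From HB Require Import structures.
From mathcomp Require Import all_boot all_order all_algebra.
From mathcomp Require Import all_classical all_reals all_analysis.
From mathcomp Require Import ring lra.
Import Order.TTheory GRing.Theory Num.Theory.
Import numFieldNormedType.Exports.
Local Open Scope classical_set_scope.
Local Open Scope ring_scope.

Lemma ip_sym {R : realType} {H : normedModType R} {ip : H -> H -> R}
  (hip : is_inner_product ip) x y : ip x y = ip y x.
Proof. by case: hip. Qed.
Lemma ipDl {R : realType} {H : normedModType R} {ip : H -> H -> R}
  (hip : is_inner_product ip) x y z : ip (x + y) z = ip x z + ip y z.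
Proof. by case: hip. Qed.
Lemma ipZl {R : realType} {H : normedModType R} {ip : H -> H -> R}
  (hip : is_inner_product ip) (c : R) x y : ip (c *: x) y = c * ip x y.
Proof. by case: hip. Qed.
Lemma ipnn {R : realType} {H : normedModType R} {ip : H -> H -> R}
  (hip : is_inner_product ip) x : ip x x = `|x| ^+ 2.
Proof. by case: hip. Qed.
Lemma ip0l {R : realType} {H : normedModType R} {ip : H -> H -> R}
  (hip : is_inner_product ip) y : ip 0 y = 0.
Proof. by rewrite -(scale0r (0:H)) (ipZl hip) mul0r. Qed.
Lemma ipNl {R : realType} {H : normedModType R} {ip : H -> H -> R}
  (hip : is_inner_product ip) x y : ip (- x) y = - ip x y.
Proof. by rewrite -scaleN1r (ipZl hip) mulN1r. Qed.
Lemma ipBl {R : realType} {H : normedModType R} {ip : H -> H -> R}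
  (hip : is_inner_product ip) x y z : ip (x - y) z = ip x z - ip y z.
Proof. by rewrite (ipDl hip) (ipNl hip). Qed.
Lemma ipDr {R : realType} {H : normedModType R} {ip : H -> H -> R}
  (hip : is_inner_product ip) x y z : ip z (x + y) = ip z x + ip z y.
Proof. by rewrite !(ip_sym hip z) (ipDl hip). Qed.
Lemma ipZr {R : realType} {H : normedModType R} {ip : H -> H -> R}
  (hip : is_inner_product ip) (c : R) x y : ip y (c *: x) = c * ip y x.
Proof. by rewrite !(ip_sym hip y) (ipZl hip). Qed.
Lemma ipBr {R : realType} {H : normedModType R} {ip : H -> H -> R}
  (hip : is_inner_product ip) x y z : ip z (x - y) = ip z x - ip z y.
Proof. by rewrite !(ip_sym hip z) (ipBl hip). Qed.

Lemma norm2D {R : realType} {H : normedModType R} {ip : H -> H -> R}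
  (hip : is_inner_product ip) x y :
  `|x + y| ^+ 2 = `|x| ^+ 2 + 2 * ip x y + `|y| ^+ 2.
Proof.
rewrite -!(ipnn hip) (ipDl hip) !(ipDr hip) (ip_sym hip y x).
by rewrite mulr2n mulrDl !mul1r !addrA.
Qed.

Lemma polar {R : realType} {H : normedModType R} {ip : H -> H -> R}
  (hip : is_inner_product ip) x y :
  ip x y = (`|x + y| ^+ 2 - `|x| ^+ 2 - `|y| ^+ 2) / 2.
Proof. rewrite (norm2D hip); set a := ip x y; set b := `|x| ^+ 2; set c := `|y| ^+ 2.
by rewrite addrAC addrK addrC addKr mulrAC divff ?mul1r // pnatr_eq0. Qed.

Lemma ip_cvgl {R : realType} {H : normedModType R} {ip : H -> H -> R}
  (hip : is_inner_product ip) (u : nat -> H) x y :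
  u @ \oo --> x -> (fun N => ip (u N) y) @ \oo --> ip x y.
Proof.
move=> ux.
have -> : (fun N => ip (u N) y) =
   (fun N => (`|u N + y| * `|u N + y| - `|u N| * `|u N| - `|y| ^+ 2) / 2).
  by apply/funext => N; rewrite (polar hip) !expr2.
rewrite (polar hip) !expr2.
apply: cvgMr_tmp; apply: cvgB; last exact: cvg_cst.
have h1 : (fun N => u N + y) @ \oo --> x + y by apply: cvgD => //; exact: cvg_cst.
apply: cvgB; apply: cvgM; apply: cvg_norm => //.
Qed.

Lemma ip_cvgr {R : realType} {H : normedModType R} {ip : H -> H -> R}
  (hip : is_inner_product ip) (u : nat -> H) x y :
  u @ \oo --> x -> (fun N => ip y (u N)) @ \oo --> ip y x.
Proof.
move=> ux; rewrite (ip_sym hip).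
have -> : (fun N => ip y (u N)) = (fun N => ip (u N) y).
  by apply/funext => N; rewrite (ip_sym hip).
exact: ip_cvgl.
Qed.

Lemma ip_suml {R : realType} {H : normedModType R} {ip : H -> H -> R}
  (hip : is_inner_product ip) (F : nat -> H) (P : pred nat) m n z :
  ip (\sum_(m <= k < n | P k) F k) z = \sum_(m <= k < n | P k) ip (F k) z.
Proof.
apply: (big_morph (fun x => ip x z)).
- by move=> a b; rewrite (ipDl hip).
- exact: (ip0l hip).
Qed.
Definition ext {R : realType} (S : set nat) (a : nat -> R) n :=
  if n \in S then a n else 0.

Lemma psum_ext {R : realType} {H : normedModType R} (S : set nat) a (v : nat -> H) :
  psum S a v = psum setT (ext S a) v.
Proof.
apply/funext => N; rewrite /psum big_mkcond [RHS]big_mkcond /=.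
apply: eq_bigr => k _; rewrite in_setT /ext.
by case: (k \in S); rewrite ?scale0r.
Qed.

Lemma psum_lin {R : realType} {H : normedModType R} (al be : R) a b (v : nat -> H) N :
  psum setT (fun n => al * a n + be * b n) v N =
  al *: psum setT a v N + be *: psum setT b v N.
Proof.
rewrite /psum !scaler_sumr -big_split /=.
by apply: eq_bigr => k _; rewrite scalerDl !scalerA.
Qed.

Lemma sum_lin {R : realType} {H : normedModType R} (al be : R) a b (v : nat -> H) :
  sum_cvg setT a v -> sum_cvg setT b v ->
  sum_cvg setT (fun n => al * a n + be * b n) v /\
  sum_on setT (fun n => al * a n + be * b n) v =
    al *: sum_on setT a v + be *: sum_on setT b v.
Proof.
move=> ca cb.
have h : psum setT (fun n => al * a n + be * b n) v @ \oo -->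
           al *: sum_on setT a v + be *: sum_on setT b v.
  have -> : psum setT (fun n => al * a n + be * b n) v =
      (fun N => al *: psum setT a v N + be *: psum setT b v N).
    by apply/funext => N; rewrite psum_lin.
  by apply: cvgD; apply: cvgZl_tmp.
split; first by apply/cvg_ex; eexists; exact: h.
by rewrite /sum_on (cvg_lim _ h).
Qed.

Lemma delta_cvg {R : realType} {H : normedModType R} (v : nat -> H) n :
  psum setT (fun k => if k == n then 1 else 0) v @ \oo --> v n.
Proof.
apply: cvg_near_cst; near=> N.
rewrite /psum (eq_bigl (fun _ => true)); last by move=> k; rewrite in_setT.
rewrite (bigD1_seq n); last 2 first.
- rewrite mem_index_iota /= ltnS; near: N; exact: nbhs_infty_ge.
- exact: iota_uniq.
rewrite eqxx scale1r big1 => [|k kn]; first by rewrite /= addr0.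
by rewrite (negbTE kn) scale0r.
Unshelve. all: by end_near.
Qed.

Lemma ip_sum_cvgr {R : realType} {H : normedModType R} {ip : H -> H -> R}
  (hip : is_inner_product ip) (S : set nat) a (v : nat -> H) z :
  sum_cvg S a v ->
  (fun N => \sum_(0 <= k < N.+1 | k \in S) a k * ip z (v k)) @ \oo -->
    ip z (sum_on S a v).
Proof.
move=> ca.
have -> : (fun N => \sum_(0 <= k < N.+1 | k \in S) a k * ip z (v k)) =
          (fun N => ip (psum S a v N) z).
  apply/funext => N; rewrite /psum (ip_suml hip).
  by apply: eq_bigr => k _; rewrite (ipZl hip) (ip_sym hip).
rewrite (ip_sym hip); exact: ip_cvgl.
Qed.

Lemma rsum_on_eq {R : realType} {H : normedModType R} {ip : H -> H -> R}
  (hip : is_inner_product ip) (S : set nat) a (v : nat -> H) n :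
  sum_cvg S a v -> rsum_on ip S a v n = ip (sum_on S a v) (v n).
Proof.
move=> ca; rewrite /rsum_on.
have -> : (fun N => \sum_(0 <= k < N.+1 | k \in S) a k * ip (v k) (v n)) =
          (fun N => \sum_(0 <= k < N.+1 | k \in S) a k * ip (v n) (v k)).
  by apply/funext => N; apply: eq_bigr => k _; rewrite (ip_sym hip).
by rewrite (cvg_lim _ (ip_sum_cvgr hip S a v (v n) ca)) // (ip_sym hip).
Qed.

Lemma cone_lin {R : realType} {H : normedModType R} (v : nat -> H) (al be : R) y z :
  0 <= al -> 0 <= be -> cone v y -> cone v z -> cone v (al *: y + be *: z).
Proof.
move=> al0 be0 [a [a0 [ca ->]]] [b [b0 [cb ->]]].
have [c e] := sum_lin al be a b v ca cb.
exists (fun n => al * a n + be * b n); split; last by split.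
by move=> n; rewrite addr_ge0 // mulr_ge0.
Qed.

Lemma cone0 {R : realType} {H : normedModType R} (v : nat -> H) : cone v 0.
Proof.
exists (fun=> 0); have h : psum setT (fun=> (0:R)) v = fun=> 0.
  by apply/funext => N; rewrite /psum big1 // => k _; rewrite scale0r.
split => //; rewrite /sum_cvg /sum_on h; split.
  apply/cvg_ex; exists 0; exact: cvg_cst.
by rewrite lim_cst.
Qed.

Lemma cone_pert {R : realType} {H : normedModType R} (v : nat -> H) a n c :
  (forall k, 0 <= a k) -> sum_cvg setT a v -> 0 <= a n + c ->
  cone v (sum_on setT a v + c *: v n).
Proof.
move=> a0 ca anc.
have cd : sum_cvg setT (fun k => if k == n then 1 else 0) v.
  by apply/cvg_ex; eexists; exact: delta_cvg.
have [c1 e1] := sum_lin 1 c a _ v ca cd.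
exists (fun k => 1 * a k + c * (if k == n then 1 else 0)); split.
  move=> k; case: eqP => [->|_]; first by rewrite mul1r mulr1.
  by rewrite mul1r mulr0 addr0.
split => //; rewrite e1 scale1r /sum_on (cvg_lim _ (delta_cvg v n)) //.
Qed.

Lemma ext_ge0 {R : realType} (S : set nat) (a : nat -> R) :
  (forall n, S n -> 0 < a n) -> forall n, 0 <= ext S a n.
Proof.
move=> h n; rewrite /ext; case: ifP => // /set_mem /h; exact: ltW.
Qed.

Lemma uniq_from_sum {R : realType} {H : normedModType R} (v : nat -> H)
  (hnpr : no_positive_relations v) S a S' a' :
  cond_i v S a -> cond_i v S' a' -> sum_on S' a' v = sum_on S a v ->
  S' = S /\ (forall n, S n -> a' n = a n).
Proof.
move=> [ca pa] [ca' pa'] e.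
have h := hnpr _ _ (@ext_ge0 _ S' a' pa') (@ext_ge0 _ S a pa).
rewrite /sum_cvg /sum_on -!psum_ext in h.
have {}h := h ca' ca e.
have hS : forall n, S n -> S' n.
  move=> n Sn; apply: contrapT => nS'; have := h n.
  rewrite /ext (mem_set Sn) ifF; last by apply/negP => /set_mem.
  by move=> e0; have := pa n Sn; rewrite -e0 ltxx.
have hS' : forall n, S' n -> S n.
  move=> n Sn; apply: contrapT => nS'; have := h n.
  rewrite /ext (mem_set Sn) [in RHS]ifF; last by apply/negP => /set_mem.
  by move=> e0; have := pa' n Sn; rewrite e0 ltxx.
split.
  by apply/funext => n; apply/propext; split; [exact: hS'|exact: hS].
move=> n Sn; have := h n; rewrite /ext (mem_set Sn) (mem_set (hS n Sn)) //.
Qed.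

Lemma real_small {R : realType} (x c T : R) :
  0 < T -> 0 <= c -> (forall t, 0 < t -> t <= T -> t * x <= t ^+ 2 * c) -> x <= 0.
Proof.
move=> T0 c0 h; rewrite leNgt; apply/negP => x0.
pose t := Num.min T (x / (c + 1)).
have c1 : 0 < c + 1 by rewrite ltr_wpDl.
have t0 : 0 < t by rewrite lt_min T0 divr_gt0.
have tT : t <= T by rewrite ge_min lexx.
have h2 : t * (c + 1) <= x.
  by rewrite -ler_pdivlMr // ge_min lexx orbT.
have h3 := h t t0 tT.
nra.
Qed.

Lemma norm_pert {R : realType} {H : normedModType R} {ip : H -> H -> R}
  (hip : is_inner_product ip) (w p u : H) (c : R) :
  `|w - (p + c *: u)| ^+ 2 = `|w - p| ^+ 2 - 2 * c * ip (w - p) u + c ^+ 2 * `|u| ^+ 2.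
Proof.
have -> : w - (p + c *: u) = (w - p) + (- c) *: u.
  by rewrite opprD addrA scaleNr.
rewrite (norm2D hip) (ipZr hip) -!(ipnn hip) (ipZl hip) (ipZr hip).
by ring.
Qed.

Lemma sq_le {R : realType} (x y : R) : 0 <= x -> 0 <= y -> x ^+ 2 <= y ^+ 2 -> x <= y.
Proof. move=> x0 y0 h; nra. Qed.

Lemma le_sq {R : realType} (x y : R) : 0 <= x -> x <= y -> x ^+ 2 <= y ^+ 2.
Proof. move=> x0 h; nra. Qed.

Lemma proj_var {R : realType} {H : normedModType R} {ip : H -> H -> R}
  (hip : is_inner_product ip) (K : set H) w p u (T : R) :
  is_metric_projection K w p -> 0 < T ->
  (forall t, 0 < t -> t <= T -> K (p + t *: u)) -> ip (w - p) u <= 0.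
Proof.
move=> [Kp hp] T0 hK.
have : 2 * ip (w - p) u <= 0.
  apply: (@real_small _ _ _ T T0 (sqr_ge0 `|u|)) => t t0 tT.
  have := le_sq _ _ (normr_ge0 _) (hp _ (hK t t0 tT)).
  rewrite (norm_pert hip) -subr_ge0 => h.
  nra.
by rewrite pmulr_rle0.
Qed.

Lemma ipNr {R : realType} {H : normedModType R} {ip : H -> H -> R}
  (hip : is_inner_product ip) x y : ip y (- x) = - ip y x.
Proof. by rewrite -scaleN1r (ipZr hip) mulN1r. Qed.

Lemma parallelogram {R : realType} {H : normedModType R} {ip : H -> H -> R}
  (hip : is_inner_product ip) (A B : H) :
  `|B - A| ^+ 2 + `|A + B| ^+ 2 = 2 * `|A| ^+ 2 + 2 * `|B| ^+ 2.
Proof.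
rewrite !(norm2D hip) (ipNr hip) normrN (ip_sym hip A B).
set a := `|A| ^+ 2; set b := `|B| ^+ 2; set c := ip B A.
by ring.
Qed.

Lemma proj_exists {R : realType} {H : completeNormedModType R} {ip : H -> H -> R}
  (hip : is_inner_product ip) (K : set H) :
  closed K -> K 0 -> (forall y z, K y -> K z -> K (2^-1 *: y + 2^-1 *: z)) ->
  forall w, exists p, is_metric_projection K w p.
Proof.
move=> Kcl K0 Kmid w.
pose E := [set r : R | exists2 y, K y & r = `|w - y| ^+ 2].
have Elb : has_lbound E by exists 0 => r [y _ ->]; exact: sqr_ge0.
have hinf : has_inf E by split => //; exists (`|w - 0| ^+ 2); exists 0.
pose D := inf E.
have Dle : forall y, K y -> D <= `|w - y| ^+ 2.
  by move=> y Ky; apply: ge_inf => //; exists y.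
have : forall k : nat, exists y, K y /\ `|w - y| ^+ 2 < D + k.+1%:R^-1.
  move=> k; have [r [y Ky ->] hr] := @inf_adherent _ E (k.+1%:R^-1) (ltac:(by rewrite invr_gt0 ltr0n)) hinf.
  by exists y.
move=> /choice [f hf].
have Kf : forall k, K (f k) by move=> k; case: (hf k).
have hfD : forall k, `|w - f k| ^+ 2 < D + k.+1%:R^-1 by move=> k; case: (hf k).
have par : forall k m, `|f k - f m| ^+ 2 <= 2 * k.+1%:R^-1 + 2 * m.+1%:R^-1.
  move=> k m.
  have e1 : f k - f m = (w - f m) - (w - f k).
    by rewrite opprB [RHS]addrC addrA subrK.
  have e2 : w - (2^-1 *: f k + 2^-1 *: f m) = 2^-1 *: ((w - f k) + (w - f m)).
    rewrite scalerDr !scalerBr.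
    have hw : w = 2^-1 *: w + 2^-1 *: w.
      have h12 : (2^-1 + 2^-1 : R) = 1 by rewrite [RHS](splitr 1) div1r.
      by rewrite -scalerDl h12 scale1r.
    by rewrite {1}hw opprD addrACA.
  have h1 := parallelogram hip (w - f k) (w - f m).
  have h2 : `|(w - f k) + (w - f m)| ^+ 2 = 4 * `|w - (2^-1 *: f k + 2^-1 *: f m)| ^+ 2.
    rewrite e2 normrZ ger0_norm ?invr_ge0 ?ler0n // exprMn.
    rewrite mulrA.
    have -> : (4:R) * 2^-1 ^+ 2 = 1 by field.
    by rewrite mul1r.
  have h3 := Dle _ (Kmid _ _ (Kf k) (Kf m)).
  have h4 := hfD k; have h5 := hfD m.
  rewrite e1.
  set P := `|w - f m - (w - f k)| ^+ 2 in h1 *; set Q := `|w - f k + (w - f m)| ^+ 2 in h1 h2.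
  set M := `|w - (2^-1 *: f k + 2^-1 *: f m)| ^+ 2 in h2 h3; set a := `|w - f k| ^+ 2 in h1 h4.
  set b := `|w - f m| ^+ 2 in h1 h5; set ik := k.+1%:R^-1 in h4 *; set im := m.+1%:R^-1 in h5 *.
  lra.
have cf : cvg (f @ \oo).
  apply/cauchy_cvgP; apply: cauchy_exP => e e0.
  have e4 : 0 < e ^+ 2 / 4 by rewrite divr_gt0 // exprn_gt0.
  have [N _ /(_ N)/(_ (leqnn _)) hN] := near_infty_natSinv_lt (PosNum e4).
  exists (f N).
  suff hh : \forall m \near \oo, ball (f N) e (f m) by exact: hh.
  near=> m.
  have Nm : (N <= m)%N by near: m; exact: nbhs_infty_ge.
  rewrite -ball_normE /ball_ /=.
  have hm : m.+1%:R^-1 <= N.+1%:R^-1 :> R.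
    by rewrite lef_pV2 ?posrE ?ltr0n // ler_nat ltnS.
  have hp := par N m.
  have hn := normr_ge0 (f N - f m).
  move: hN hm hp hn => /=.
  set x := `|f N - f m|; set iN := N.+1%:R^-1; set iM := m.+1%:R^-1.
  move=> hN hm hp hn.
  rewrite ltNge; apply/negP => hx.
  nra.
set p := lim (f @ \oo).
have Kp : K p.
  apply: (closed_cvg K Kcl _ _ cf).
  by apply: nearW => k; exact: Kf.
have hc : (fun k => `|w - f k| * `|w - f k|) @ \oo --> `|w - p| * `|w - p|.
  by apply: cvgM; apply: cvg_norm; apply: cvgB => //; exact: cvg_cst.
have pD : `|w - p| ^+ 2 <= D.
  apply/ler_addgt0Pr => e e0.
  rewrite expr2 -(cvg_lim _ hc) //; apply: limr_le; first by apply/cvg_ex; eexists; exact: hc.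
  near=> k; rewrite -expr2; apply: (le_trans (ltW (hfD k))); rewrite lerD2l.
  apply: ltW; near: k; exact: (near_infty_natSinv_lt (PosNum e0)).
exists p; split => // y Ky.
apply: sq_le; rewrite ?normr_ge0 //.
exact: le_trans pD (Dle _ Ky).
Unshelve. all: by end_near.
Qed.

Lemma mid_norm {R : realType} {H : normedModType R} {ip : H -> H -> R}
  (hip : is_inner_product ip) (w y z : H) :
  `|(w - y) + (w - z)| ^+ 2 = 4 * `|w - (2^-1 *: y + 2^-1 *: z)| ^+ 2.
Proof.
have e2 : w - (2^-1 *: y + 2^-1 *: z) = 2^-1 *: ((w - y) + (w - z)).
  rewrite scalerDr !scalerBr.
  have hw : w = 2^-1 *: w + 2^-1 *: w.
    have h12 : (2^-1 + 2^-1 : R) = 1 by rewrite [RHS](splitr 1) div1r.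
    by rewrite -scalerDl h12 scale1r.
  by rewrite {1}hw opprD addrACA.
rewrite e2 normrZ ger0_norm ?invr_ge0 ?ler0n // exprMn mulrA.
have -> : (4:R) * 2^-1 ^+ 2 = 1 by field.
by rewrite mul1r.
Qed.

Lemma proj_unique {R : realType} {H : normedModType R} {ip : H -> H -> R}
  (hip : is_inner_product ip) (K : set H) w p q :
  (forall y z, K y -> K z -> K (2^-1 *: y + 2^-1 *: z)) ->
  is_metric_projection K w p -> is_metric_projection K w q -> p = q.
Proof.
move=> Kmid [Kp hp] [Kq hq].
have h1 := parallelogram hip (w - p) (w - q).
have h2 := mid_norm hip w p q.
have h3 := le_sq _ _ (normr_ge0 _) (hp _ (Kmid _ _ Kp Kq)).
have h4 := le_sq _ _ (normr_ge0 _) (hp _ Kq).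
have h5 := le_sq _ _ (normr_ge0 _) (hq _ Kp).
have e1 : w - q - (w - p) = p - q by rewrite opprB [LHS]addrC addrA subrK.
rewrite e1 in h1.
have h6 := sqr_ge0 `|p - q|.
move: h1 h2 h3 h4 h5 h6.
set P := `|p - q| ^+ 2; set Q := `|w - p + (w - q)| ^+ 2.
set M := `|w - (2^-1 *: p + 2^-1 *: q)| ^+ 2; set a := `|w - p| ^+ 2.
set b := `|w - q| ^+ 2 => h1 h2 h3 h4 h5 h6.
have : P = 0 by lra.
rewrite /P => /eqP; rewrite expf_eq0 /= normr_eq0 subr_eq0 => /eqP //.
Qed.

Lemma iii_proj {R : realType} {H : normedModType R} {ip : H -> H -> R}
  (hip : is_inner_product ip) (v : nat -> H) w S a :
  cond_i v S a -> cond_ii ip v w S a -> cond_iii ip v w S a ->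
  is_metric_projection (cone v) w (sum_on S a v).
Proof.
move=> [ca pa] hii hiii; set p := sum_on S a v.
have Kp : cone v p.
  exists (ext S a); split; first exact: ext_ge0.
  by rewrite /sum_cvg /sum_on -psum_ext.
have g : forall n, 0 <= ip (p - w) (v n).
  by move=> n; rewrite (ipBl hip) subr_ge0 -(rsum_on_eq hip) //; exact: hii.
have g0 : forall n, S n -> ip (p - w) (v n) = 0.
  by move=> n Sn; rewrite (ipBl hip) -(rsum_on_eq hip) // hiii // subrr.
have pp : ip (p - w) p = 0.
  have h := ip_sum_cvgr hip S a v (p - w) ca.
  rewrite -(cvg_lim _ h) //.
  have -> : (fun N => \sum_(0 <= k < N.+1 | k \in S) a k * ip (p - w) (v k)) = fun=> 0.
    apply/funext => N; apply: big1 => k /set_mem Sk; by rewrite g0 // mulr0.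
  by rewrite lim_cst.
split => // y0 [b [b0 [cb ->]]].
have py : 0 <= ip (p - w) (sum_on setT b v).
  have h := ip_sum_cvgr hip setT b v (p - w) cb.
  rewrite -(cvg_lim _ h) //; apply: limr_ge; first by apply/cvg_ex; eexists; exact: h.
  apply: nearW => N; apply: sumr_ge0 => k _; exact: mulr_ge0.
set y := sum_on setT b v in py *.
have e : w - y = (w - p) + (p - y) by rewrite addrA subrK.
apply: sq_le; rewrite ?normr_ge0 // e [X in _ <= X](norm2D hip) (ipBr hip) -opprB !(ipNl hip).
rewrite pp; have := sqr_ge0 `|p - y|; lra.
Qed.

Theorem proposition1p3 (R : realType) (H : completeNormedModType R)
  (ip : H -> H -> R) (hip : is_inner_product ip)
  (v : nat -> H) (hnpr : no_positive_relations v) (hcl : closed (cone v))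
  (w : H) :
  exists (S : set nat) (a : nat -> R),
    [/\ cond_i v S a,
        is_metric_projection (cone v) w (sum_on S a v),
        cond_ii ip v w S a,
        cond_iii ip v w S a &
        forall (S' : set nat) (a' : nat -> R), cond_i v S' a' ->
          (is_metric_projection (cone v) w (sum_on S' a' v) \/
           (cond_ii ip v w S' a' /\ cond_iii ip v w S' a')) ->
          S' = S /\ (forall n, S n -> a' n = a n)].
Proof.
have Kmid : forall y z, cone v y -> cone v z -> cone v (2^-1 *: y + 2^-1 *: z).
  by move=> y z Ky Kz; apply: cone_lin => //; rewrite invr_ge0 ler0n.
have [p hp] := proj_exists hip (cone v) hcl (cone0 v) Kmid w.
have [[a [a0 [ca pe]]] _] := hp.
pose S := [set n | 0 < a n].
have eS : psum S a v = psum setT a v.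
  rewrite psum_ext; have -> // : ext S a = a.
  apply/funext => n; rewrite /ext; case: ifP => [//|/negP hn].
  apply/esym/eqP; rewrite eq_le a0 andbT leNgt; apply/negP => h.
  by apply: hn; apply: mem_set.
have ciS : cond_i v S a by split => //; rewrite /sum_cvg eS.
have sp : sum_on S a v = p by rewrite /sum_on eS pe.
have hii : cond_ii ip v w S a.
  move=> n; rewrite (rsum_on_eq hip) ?sp //; last by case: ciS.
  have := proj_var hip _ _ _ (v n) 1 hp ltr01.
  rewrite (ipBl hip) subr_le0; apply => t t0 _.
  by rewrite pe; apply: cone_pert => //; rewrite addr_ge0 // ltW.
have hiii : cond_iii ip v w S a.
  move=> n Sn; apply/le_anti; rewrite hii andbT.
  rewrite (rsum_on_eq hip) ?sp //; last by case: ciS.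
  have := proj_var hip _ _ _ (- v n) (a n) hp Sn.
  rewrite (ipNr hip) (ipBl hip) oppr_le0 subr_ge0; apply => t t0 tan.
  rewrite scalerN -scaleNr pe; apply: cone_pert => //.
  by rewrite subr_ge0.
exists S, a; split => //; first by rewrite sp.
move=> S' a' ci' hh.
have hp' : is_metric_projection (cone v) w (sum_on S' a' v).
  case: hh => [h|[h2 h3]]; first exact: h.
  exact: (iii_proj hip v w S' a' ci' h2 h3).
apply: (uniq_from_sum v hnpr S a S' a' ciS ci').
rewrite sp; exact: (proj_unique hip (cone v) w _ _ Kmid hp' hp).
Qed.
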